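(* Let $0<a\le1$. For $x>0$ let $H(a,x):=\dfrac{e^{(1-a)x}}{e^x-1}-\dfrac1x$, and for $x,y>0$ let $$\mathcal{H}(a;x,y):=\frac{H(a,x+y)}{e^y-1}+\frac{H(1,y)}{x+y}.$$ Then $\mathcal{H}(a;x,y)<0$ for all $x,y>0$ if and only if $a\ge1/2$. *)

(* Defs.v *)
From Stdlib Require Import Reals.
Open Scope R_scope.

Definition Hfun (a x : R) : R :=
  exp ((1 - a) * x) / (exp x - 1) - 1 / x.

Definition calH (a x y : R) : R :=
  Hfun a (x + y) / (exp y - 1) + Hfun 1 y / (x + y).

(* Main.v *)
From Coquelicot Require Import Coquelicot.
Require Import Defs.
From Stdlib Require Import Reals Lra.
Open Scope R_scope.
Lemma pos_of_deriv (f df : R -> R) (u : R) :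
  (forall x, is_derive f x (df x)) -> f 0 = 0 -> 0 < u ->
  (forall t, 0 <= t <= u -> 0 <= df t) -> (forall t, 0 < t <= u -> 0 < df t) ->
  0 < f u.
Proof.
  intros Hd H0 Hu Hnn Hp.
  assert (Hc : forall x, continuity_pt f x).
  { intro x. apply continuity_pt_filterlim. apply (ex_derive_continuous (K:=R_AbsRing) (V:=R_NormedModule)).
    eexists; apply Hd. }
  destruct (MVT_gen f 0 (u/2) df) as [c [Hc1 Hc2]].
  { intros; apply Hd. } { intros; apply Hc. }
  destruct (MVT_gen f (u/2) u df) as [d [Hd1 Hd2]].
  { intros; apply Hd. } { intros; apply Hc. }
  rewrite Rmin_left in Hc1 by lra. rewrite Rmax_right in Hc1 by lra.
  rewrite Rmin_left in Hd1 by lra. rewrite Rmax_right in Hd1 by lra.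
  assert (0 <= df c) by (apply Hnn; lra).
  assert (0 < df d) by (apply Hp; lra).
  assert (0 <= df c * (u/2 - 0)) by (apply Rmult_le_pos; lra).
  assert (0 < df d * (u - u/2)) by (apply Rmult_lt_0_compat; lra).
  lra.
Qed.

Lemma calH_eq a x y : 0 < x -> 0 < y ->
  calH a x y = (exp ((1-a)*(x+y)) * (y*(x+y)) - (exp (x+y) - 1)*(exp y - 1))
               / ((exp (x+y) - 1)*(exp y - 1)*(y*(x+y))).
Proof.
  intros hx hy.
  assert (1 + (x+y) < exp (x+y)) by (apply exp_ineq1; lra).
  assert (1 + y < exp y) by (apply exp_ineq1; lra).
  unfold calH, Hfun. replace ((1-1)*y) with 0 by ring. rewrite exp_0.
  field. repeat split; lra.
Qed.

Lemma sinh_ineq u : 0 < u -> 2*u < exp u - exp (-u).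
Proof.
  intro hu.
  assert (H := pos_of_deriv (fun t => exp t - exp (-t) - 2*t)
                 (fun t => exp t + exp (-t) - 2) u).
  simpl in H.
  assert (Hk: forall t, 0 <= t -> 0 <= exp t + exp (-t) - 2 /\ (0 < t -> 0 < exp t + exp (-t) - 2)).
  { intros t ht. assert (E: exp (-t) = / exp t) by apply exp_Ropp.
    assert (1 <= exp t). { destruct (Req_dec t 0). subst; rewrite exp_0; lra.
      assert (1 + t < exp t) by (apply exp_ineq1; lra). lra. }
    rewrite E. split.
    - assert (0 <= (exp t - 1)^2 / exp t).
      { apply Rdiv_le_0_compat; [nra|lra]. }
      replace (exp t + / exp t - 2) with ((exp t - 1)^2 / exp t) by (field; lra). lra.
    - intro htp. assert (1 + t < exp t) by (apply exp_ineq1; lra).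
      assert (0 < (exp t - 1)^2 / exp t).
      { apply Rdiv_lt_0_compat; [nra|lra]. }
      replace (exp t + / exp t - 2) with ((exp t - 1)^2 / exp t) by (field; lra). lra. }
  assert (0 < exp u - exp (-u) - 2*u); [|lra].
  apply H; auto.
  - intro x. auto_derive; auto. ring.
  - replace (-0) with 0 by ring. rewrite exp_0. ring.
  - intros t ht. apply Hk; lra.
  - intros t ht. apply Hk; lra.
Qed.

Lemma small_pos a : 0 < a -> a < 1/2 ->
  exists s, 0 < s /\ exp s - 1 < s * exp ((1-a)*s).
Proof.
  intros ha0 ha.
  set (c := 1 - a).
  set (s := (c - a)/(a*c)).
  assert (hc : 0 < c) by (unfold c; lra).
  assert (hs : 0 < s) by (unfold s; apply Rdiv_lt_0_compat; [unfold c; lra| nra]).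
  exists s. split; auto.
  assert (H := pos_of_deriv (fun t => t * exp (c*t) - exp t + 1)
                 (fun t => exp (c*t) + t * (c * exp (c*t)) - exp t) s).
  simpl in H.
  assert (Hk : forall t, 0 <= t <= s ->
     exp (c*t) + t * (c * exp (c*t)) - exp t = exp (c*t) * (1 + c*t - exp (a*t))).
  { intros t _. assert (exp t = exp (c*t) * exp (a*t)).
    { rewrite <- exp_plus. f_equal. unfold c; ring. }
    rewrite H0. ring. }
  assert (Hb : forall t, 0 < t <= s -> exp (a*t) < 1 + c*t).
  { intros t ht.
    assert (hat : a*t < 1).
    { assert (a*t <= a*s) by (apply Rmult_le_compat_l; lra).
      assert (a*s = (c-a)/c) by (unfold s; field; lra).
      assert ((c-a)/c < 1). { apply (Rmult_lt_reg_r c); auto.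
        unfold Rdiv; rewrite Rmult_assoc, Rinv_l by lra. lra. }
      lra. }
    assert (1 + (-(a*t)) < exp (-(a*t))) by (apply exp_ineq1; nra).
    rewrite exp_Ropp in H0.
    assert (0 < exp (a*t)) by apply exp_pos.
    assert (hct : a*c*t <= c - a).
    { assert (a*c*t <= a*c*s) by (apply Rmult_le_compat_l; nra).
      assert (a*c*s = c - a) by (unfold s; field; lra). lra. }
    assert (exp (a*t) * (1 - a*t) < 1).
    { apply (Rmult_lt_compat_l (exp (a*t))) in H0; auto.
      rewrite Rinv_r in H0 by lra. lra. }
    assert (1 <= (1 + c*t) * (1 - a*t)) by nra.
    assert (0 < 1 - a*t) by lra.
    nra. }
  assert (0 < s * exp (c*s) - exp s + 1); [|unfold c in *; lra].
  apply H; auto.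
  - intro x. auto_derive; auto. ring.
  - rewrite exp_0. ring.
  - intros t ht. rewrite Hk by lra.
    assert (0 < exp (c*t)) by apply exp_pos.
    destruct (Req_dec t 0). subst. replace (a*0) with 0 by ring. replace (c*0) with 0 by ring. rewrite exp_0. lra.
    assert (exp (a*t) < 1 + c*t) by (apply Hb; lra). nra.
  - intros t ht. rewrite Hk by lra.
    assert (0 < exp (c*t)) by apply exp_pos.
    assert (exp (a*t) < 1 + c*t) by (apply Hb; lra). nra.
Qed.

Theorem lemma3p10 (a : R) (ha0 : 0 < a) (ha1 : a <= 1) :
  (forall x y : R, 0 < x -> 0 < y -> calH a x y < 0) <-> 1 / 2 <= a.
Proof.
  split.
  - intro Hall. destruct (Rlt_or_le a (1/2)) as [hlt|]; auto. exfalso.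
    destruct (small_pos a ha0 hlt) as [s [hs Hs]].
    assert (hA : 1 + s < exp s) by (apply exp_ineq1; lra).
    set (E := exp ((1-a)*s)) in *.
    set (g := s * E / (exp s - 1)).
    assert (hg : 1 < g).
    { unfold g. apply (Rmult_lt_reg_r (exp s - 1)); [lra|].
      unfold Rdiv; rewrite Rmult_assoc, Rinv_l by lra. lra. }
    set (y := Rmin (s/2) ((g-1)/g)).
    assert (hy0 : 0 < y).
    { unfold y; apply Rmin_glb_lt; [lra| apply Rdiv_lt_0_compat; lra]. }
    assert (hy1 : y <= s/2) by (unfold y; apply Rmin_l).
    assert (hy2 : y <= (g-1)/g) by (unfold y; apply Rmin_r).
    assert (hy3 : y * g <= g - 1).
    { apply (Rmult_le_compat_r g) in hy2; [|lra].
      unfold Rdiv in hy2; rewrite Rmult_assoc, Rinv_l in hy2 by lra. lra. }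
    assert (hey : exp y - 1 < y * g).
    { assert (1 + (-y) < exp (-y)) by (apply exp_ineq1; lra).
      rewrite exp_Ropp in H.
      assert (0 < exp y) by apply exp_pos.
      assert (exp y * (1 - y) < 1).
      { apply (Rmult_lt_compat_l (exp y)) in H; auto.
        rewrite Rinv_r in H by lra. lra. }
      assert (exp y < g) by nra.
      assert (exp y * y < g * y) by (apply Rmult_lt_compat_r; lra).
      nra. }
    assert (hx : 0 < s - y) by lra.
    specialize (Hall (s - y) y hx hy0).
    rewrite calH_eq in Hall by auto.
    replace (s - y + y) with s in Hall by ring.
    fold E in Hall.
    assert (hey0 : 1 + y < exp y) by (apply exp_ineq1; lra).
    assert (hsg : s * E = g * (exp s - 1)) by (unfold g; field; lra).
    assert (0 < (E * (y * s) - (exp s - 1) * (exp y - 1))).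
    { assert ((exp s - 1) * (exp y - 1) < (exp s - 1) * (y*g))
        by (apply Rmult_lt_compat_l; lra).
      nra. }
    assert (0 < (E * (y * s) - (exp s - 1) * (exp y - 1)) /
                ((exp s - 1) * (exp y - 1) * (y * s))).
    { apply Rdiv_lt_0_compat; auto.
      apply Rmult_lt_0_compat; [apply Rmult_lt_0_compat|apply Rmult_lt_0_compat]; lra. }
    lra.
  - intros ha x y hx hy. rewrite calH_eq by auto.
    set (s := x + y).
    assert (hs : 0 < s) by (unfold s; lra).
    assert (hA : 1 + s < exp s) by (apply exp_ineq1; lra).
    assert (hB : 1 + y < exp y) by (apply exp_ineq1; lra).
    assert (hE : exp ((1-a)*s) <= exp (s/2)).
    { destruct (Req_dec a (1/2)). subst. right; f_equal; field.
      left; apply exp_increasing; nra. }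
    assert (hk : s < exp (s/2) - exp (-(s/2))).
    { assert (H := sinh_ineq (s/2)). lra. }
    assert (hk2 : s * exp (s/2) < exp s - 1).
    { assert (exp (s/2) * exp (-(s/2)) = 1).
      { rewrite <- exp_plus. replace (s/2 + -(s/2)) with 0 by ring. apply exp_0. }
      assert (exp (s/2) * exp (s/2) = exp s).
      { rewrite <- exp_plus. f_equal; field. }
      assert (0 < exp (s/2)) by apply exp_pos. nra. }
    assert (h1 : exp ((1-a)*s) * (y*s) < (exp s - 1) * (exp y - 1)).
    { assert (0 < y*s) by nra.
      assert (exp ((1-a)*s) * (y*s) <= exp (s/2) * (y*s)) by (apply Rmult_le_compat_r; lra).
      assert (s * exp (s/2) * y < (exp s - 1) * y) by (apply Rmult_lt_compat_r; lra).
      assert ((exp s - 1) * y < (exp s - 1) * (exp y - 1)) by (apply Rmult_lt_compat_l; lra).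
      nra. }
    assert (0 < / ((exp s - 1) * (exp y - 1) * (y * s))).
    { apply Rinv_0_lt_compat.
      apply Rmult_lt_0_compat; [apply Rmult_lt_0_compat|apply Rmult_lt_0_compat]; lra. }
    unfold Rdiv. nra.
Qed.
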